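(* Let $G$ be a word hyperbolic group and $0\to\mathbb Z\xrightarrow{\iota}E\xrightarrow{\pi}G\to1$ a central extension, $X$ a finite set mapping onto a symmetric generating set of $E$ (evaluation $w\mapsto\overline w\in E$). Let $C>0$ be an integer such that for every $g\in G$ the maximum $\rho(g):=\max\{\overline w\,\iota(-C\,\mathrm{len}(w)): w\in X^*,\ \pi(\overline w)=g\}$ exists in the ordered fibre $\pi^{-1}(g)$, and such that for some $\lambda>0$ every word achieving this maximum is a $(\lambda,0)$-quasigeodesic in the Cayley graph of $G$ with respect to $\pi(\overline X)$. Let $0\to\mathbb Q\xrightarrow{\iota_{\mathbb Q}}E_{\mathbb Q}\to G\to1$ be the pushout of the extension along $\mathbb Z\subset\mathbb Q$, and define $q:G\to E_{\mathbb Q}$ by $q(g)=\tfrac12\big(\rho(g)+\rho(g^{-1})^{-1}\big)$. Then the cocycle determined by $q$ is bounded: there is a constant $M$ such that the rational number $\tau(g,h)$ defined by $\iota_{\mathbb Q}(\tau(g,h))=q(gh)^{-1}q(g)q(h)$ satisfies $|\tau(g,h)|\le M$ for all $g,h\in G$.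
   Context: Order on a fibre: $h_1\le h_2$ iff $h_2h_1^{-1}=\iota(n)$ with $n\ge0$. $E_{\mathbb Q}=(E\times\mathbb Q)/\{(\iota(n),-n):n\in\mathbb Z\}$, a central extension of $G$ by $\mathbb Q$ containing $E$. For $h_1,h_2$ in the same fibre of $E_{\mathbb Q}\to G$, their average $\tfrac12(h_1+h_2)$ is $h_2\,\iota_{\mathbb Q}(r/2)$ where $\iota_{\mathbb Q}(r)=h_1h_2^{-1}$; note $\rho(g)$ and $\rho(g^{-1})^{-1}$ lie in the same fibre. *)

(* Defs.v *)
From HB Require Import structures.
From mathcomp Require Import all_boot all_order all_algebra.

Set Implicit Arguments.
Unset Strict Implicit.
Unset Printing Implicit Defensive.

Import Order.TTheory GRing.Theory Num.Theory.

Local Open Scope group_scope.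

Definition word_eval (A : Type) (H : groupType) (ev : A -> H) (w : seq A) : H :=
  \prod_(a <- w) ev a.

Definition word_length (H : groupType) (S : seq H) (g : H) (n : nat) : Prop :=
  (exists w : seq H, all (fun s => s \in S) w /\ size w = n /\ \prod_(s <- w) s = g)
  /\ (forall w : seq H, all (fun s => s \in S) w -> \prod_(s <- w) s = g -> (n <= size w)%N).

Definition cayley_dist (H : groupType) (S : seq H) (a b : H) (n : nat) : Prop :=
  word_length S (a^-1 * b) n.

Definition fin_sym_gen (H : groupType) (S : seq H) : Prop :=
  (forall s, s \in S -> s^-1 \in S) /\
  (forall g : H, exists w : seq H, all (fun s => s \in S) w /\ \prod_(s <- w) s = g).

Definition four_point (H : groupType) (S : seq H) (delta : nat) : Prop :=
  forall x y z u : H, forall dxy dzu dxz dyu dxu dyz : nat,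
    cayley_dist S x y dxy -> cayley_dist S z u dzu ->
    cayley_dist S x z dxz -> cayley_dist S y u dyu ->
    cayley_dist S x u dxu -> cayley_dist S y z dyz ->
    (dxy + dzu <= maxn (dxz + dyu) (dxu + dyz) + 2 * delta)%N.

Definition word_hyperbolic (H : groupType) : Prop :=
  exists S : seq H, fin_sym_gen S /\ exists delta : nat, four_point S delta.

Definition central_extension (E G : groupType) (iota : int -> E) (pi : E -> G) : Prop :=
  (forall a b : int, iota (a + b)%R = iota a * iota b) /\
  injective iota /\
  (forall (n : int) (e : E), iota n * e = e * iota n) /\
  (forall e f : E, pi (e * f) = pi e * pi f) /\
  (forall g : G, exists e : E, pi e = g) /\
  (forall e : E, pi e = 1 <-> exists n : int, e = iota n).

Definition fibre_le (E : groupType) (iota : int -> E) (h1 h2 : E) : Prop :=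
  exists n : int, (0 <= n)%R /\ h2 * h1^-1 = iota n.

(* The rationalised extension E_Q = (E x Q) / {(iota n, -n)}           *)
(* represented by pairs, with the quotient relation [EQ_eq]            *)

Definition EQ_mul (E : groupType) (a b : E * rat) : E * rat :=
  (a.1 * b.1, (a.2 + b.2)%R).
Definition EQ_inv (E : groupType) (a : E * rat) : E * rat := (a.1^-1, (- a.2)%R).
Definition EQ_eq (E : groupType) (iota : int -> E) (a b : E * rat) : Prop :=
  exists n : int, a.1^-1 * b.1 = iota n /\ (b.2 - a.2)%R = (- n%:~R)%R.
Definition iotaQ (E : groupType) (r : rat) : E * rat := (1, r).
Definition EinEQ (E : groupType) (e : E) : E * rat := (e, 0%R).

(* [a] is (a representative of) the average 1/2 (h1 + h2) of h1, h2 in the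
   same fibre of E_Q -> G: a = h2 iota_Q(r/2) where iota_Q(r) = h1 h2^-1. *)
Definition EQ_average (E : groupType) (iota : int -> E) (h1 h2 a : E * rat) : Prop :=
  exists r : rat, EQ_eq iota (iotaQ E r) (EQ_mul h1 (EQ_inv h2)) /\
                  EQ_eq iota a (EQ_mul h2 (iotaQ E (r / 2)%R)).

Definition weighted (X : Type) (E : groupType) (ev : X -> E) (iota : int -> E)
    (C : nat) (w : seq X) : E :=
  word_eval ev w * iota (- (C * size w)%N%:Z)%R.

Definition is_rho (X : Type) (E G : groupType) (ev : X -> E) (iota : int -> E)
    (pi : E -> G) (C : nat) (g : G) (rg : E) : Prop :=
  (exists w : seq X, pi (word_eval ev w) = g /\ weighted ev iota C w = rg) /\
  (forall w : seq X, pi (word_eval ev w) = g -> fibre_le iota (weighted ev iota C w) rg).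

Definition quasigeodesic (X : finType) (E G : groupType) (ev : X -> E)
    (pi : E -> G) (lambda : rat) (w : seq X) : Prop :=
  forall i j : nat, (i <= j)%N -> (j <= size w)%N ->
  forall d : nat,
    cayley_dist [seq pi (ev x) | x <- enum X]
      (pi (word_eval ev (take i w))) (pi (word_eval ev (take j w))) d ->
    ((j - i)%:R <= lambda * d%:R)%R /\ (d%:R <= lambda * (j - i)%:R)%R.

(* Main.v *)
From mathcomp Require Import all_boot all_order all_algebra zify.
Require Import Defs.
From HB Require Import structures.
From Stdlib Require Import Classical ClassicalEpsilon.
From mathcomp.algebra_tactics Require Import lra.
Set Implicit Arguments.
Unset Strict Implicit.
Unset Printing Implicit Defensive.
Import Order.TTheory GRing.Theory Num.Theory.

Definition metric_ok (T : Type) (d : T -> T -> nat) :=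
  (forall x, d x x = 0) /\ (forall x y, d x y = d y x) /\
  (forall x y z, d x z <= d x y + d y z).
Definition fp_ok (T : Type) (d : T -> T -> nat) (delta : nat) :=
  forall x y z u, d x y + d z u <= maxn (d x z + d y u) (d x u + d y z) + 2 * delta.
Definition gchain (T : Type) (d : T -> T -> nat) (g : nat -> T) x y :=
  g 0 = x /\ g (d x y) = y /\ forall i j, i <= j -> j <= d x y -> d (g i) (g j) = j - i.
Definition geod_ok (T : Type) (d : T -> T -> nat) := forall x y, exists g, gchain d g x y.
Definition gp (T : Type) (d : T -> T -> nat) x y w := d w x + d w y - d x y.

Lemma gp_min (T : Type) (d : T -> T -> nat) delta x y z w A :
  metric_ok d -> fp_ok d delta -> A <= gp d x y w -> A <= gp d y z w ->
  A <= gp d x z w + 2 * delta.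
Proof.
move=> [d0 [ds dt]] fp; rewrite /gp => h1 h2.
have := fp x z y w. have := dt x w y. have := dt y w z. have := dt x w z.
have := ds w x. have := ds w y. have := ds w z. have := ds z y. have := ds y x.
have := ds x z.
lia.
Qed.

Lemma gp_sym (T : Type) (d : T -> T -> nat) x y w :
  metric_ok d -> gp d x y w = gp d y x w.
Proof. move=> [_ [ds _]]; rewrite /gp (ds x y); lia. Qed.

Lemma path_gp (T : Type) (d : T -> T -> nat) delta w L D0 k :
  metric_ok d -> fp_ok d delta -> forall (x : nat -> T) m, m <= 2 ^ k ->
  (forall i, i < m -> d (x i) (x i.+1) <= L) ->
  (forall i, i <= m -> D0 <= d w (x i)) ->
  2 * D0 <= gp d (x 0) (x m) w + 2 * L + 2 * delta * k.
Proof.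
move=> md fp; have [d0 [ds dt]] := md.
elim: k => [|k IH] x m hm hs hD.
  rewrite expn0 in hm.
  case: m hm hs hD => [|[|//]] _ hs hD.
    rewrite /gp d0; have := hD 0 (leqnn 0); lia.
  have := hs 0 isT; have := hD 0 isT; have := hD 1 isT.
  have := dt w (x 0) (x 1). rewrite /gp; lia.
case: (leqP m (2 ^ k)) => hmk.
  have := IH x m hmk hs hD; lia.
have h1 := IH x (2 ^ k) (leqnn _) (fun i hi => hs i (ltn_trans hi hmk))
  (fun i hi => hD i (leq_trans hi (ltnW hmk))).
have hm2 : m - 2 ^ k <= 2 ^ k by rewrite expnS in hm; lia.
have h2 := IH (fun i => x (i + 2 ^ k)) (m - 2 ^ k) hm2
  (fun i hi => hs (i + 2 ^ k) ltac:(lia)) (fun i hi => hD (i + 2 ^ k) ltac:(lia)).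
rewrite /= add0n subnK in h2; last by lia.
have := @gp_min T d delta (x 0) (x (2 ^ k)) (x m) w
  (2 * D0 - (2 * L + 2 * delta * k)) md fp ltac:(lia) ltac:(lia).
rewrite mulnS; lia.
Qed.

Lemma tripod_gt (T : Type) (d : T -> T -> nat) delta (al be : nat -> T) X Y Z j :
  metric_ok d -> fp_ok d delta -> gchain d al X Y -> gchain d be X Z ->
  j <= d X Y -> j <= d X Z -> 2 * j <= d X Y + d X Z - d Y Z + 1 ->
  d (al j) (be j) <= 4 * delta + 1.
Proof.
move=> md fp [a0 [aN ad]] [b0 [bN bd]] hj1 hj2 hj.
have [d0 [ds dt]] := md.
have e1 : d X (al j) = j by rewrite -a0 ad //; lia.
have e2 : d (al j) Y = d X Y - j by rewrite -[in LHS]aN ad.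
have e3 : d X (be j) = j by rewrite -b0 bd //; lia.
have e4 : d (be j) Z = d X Z - j by rewrite -[in LHS]bN bd.
have g1 : 2 * j - 1 <= gp d (al j) Y X by rewrite /gp e1 e2; lia.
have g2 : 2 * j - 1 <= gp d Y Z X by rewrite /gp; lia.
have g3 : 2 * j - 1 <= gp d Z (be j) X by rewrite /gp e3 (ds Z) e4; lia.
have h1 := gp_min md fp g1 g2.
have h2 := @gp_min T d delta (al j) Z (be j) X (2 * j - 1 - 2 * delta) md fp ltac:(lia) ltac:(lia).
have := dt (al j) X (be j). rewrite (ds (al j) X).
move: h2; rewrite /gp e1 e3; lia.
Qed.

Fixpoint minf (h : nat -> nat) (n : nat) : nat :=
  if n is n'.+1 then minn (minf h n') (h n) else h 0.
Fixpoint maxf (h : nat -> nat) (n : nat) : nat :=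
  if n is n'.+1 then maxn (maxf h n') (h n) else h 0.

Lemma minf_le h n i : i <= n -> minf h n <= h i.
Proof.
elim: n i => [|n IH] i hi /=; first by move: hi; rewrite leqn0 => /eqP->.
case: (ltngtP i n.+1) hi => // [hi _|-> _]; last by rewrite geq_minr.
by rewrite geq_min IH.
Qed.

Lemma minf_ex h n : exists2 i, i <= n & minf h n = h i.
Proof.
elim: n => [|n [i hi e]] /=; first by exists 0.
case: (leqP (minf h n) (h n.+1)) => c.
  by exists i; [lia | rewrite e; move: c; rewrite e; lia].
by exists n.+1 => //; lia.
Qed.

Lemma maxf_ge h n i : i <= n -> h i <= maxf h n.
Proof.
elim: n i => [|n IH] i hi /=; first by move: hi; rewrite leqn0 => /eqP->.
case: (ltngtP i n.+1) hi => // [hi _|-> _]; last by rewrite leq_maxr.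
by rewrite leq_max IH.
Qed.

Lemma maxf_ex h n : exists2 i, i <= n & maxf h n = h i.
Proof.
elim: n => [|n [i hi e]] /=; first by exists 0.
case: (leqP (maxf h n) (h n.+1)) => c.
  by exists n.+1 => //; lia.
by exists i; [lia | rewrite e; move: c; rewrite e; lia].
Qed.

Lemma pow2_sq k : k * k <= 2 ^ k + 16.
Proof.
suff H : forall k', 4 <= k' -> k' * k' <= 2 ^ k'.
  case: (leqP 4 k) => hk; first by have := H k hk; lia.
  by case: k hk => [|[|[|[|]]]].
clear k; elim => [//|k IH] hk.
case: (ltngtP k 4) => c.
- by case: k c hk IH => [|[|[|[|]]]].
- have := IH (ltnW c); rewrite expnS; nia.
- by rewrite c.
Qed.

Lemma sq_bound k a b : k * k <= a * k + b -> k <= a + b.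
Proof. move=> h; case: (leqP k (a + b)) => // c; nia. Qed.

Lemma pow2_ex m : exists k, m <= 2 ^ k /\ 2 ^ k <= 2 * m + 1.
Proof.
elim: m => [|m [k [h1 h2]]]; first by exists 0.
case: (ltnP m (2 ^ k)) => c; first by exists k; lia.
exists k.+1; rewrite expnS; lia.
Qed.

Lemma morse1 (T : Type) (d : T -> T -> nat) delta L mu :
  metric_ok d -> fp_ok d delta -> geod_ok d -> 1 <= L ->
  exists Dm, forall (p : nat -> T) n g,
   (forall i, i < n -> d (p i) (p i.+1) <= L) ->
   (forall i j, i <= j -> j <= n -> j - i <= mu * d (p i) (p j)) ->
   gchain d g (p 0) (p n) ->
   forall j, j <= d (p 0) (p n) -> exists2 i, i <= n & d (g j) (p i) <= Dm.
Proof.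
move=> md fp go hL.
have [d0 [ds dt]] := md.
set c := 6 * mu + 2.
exists (L + delta * (2 * c * delta + (2 * c * L + 4 * c * delta + 17)) + 2 * delta).
move=> p n g hs hq [g0 [gN gd]].
set N := d (p 0) (p n).
pose f j := minf (fun i => d (g j) (p i)) n.
have fle : forall j i, i <= n -> f j <= d (g j) (p i).
  by move=> j i hi; exact: minf_le.
have fex : forall j, exists2 i, i <= n & f j = d (g j) (p i).
  by move=> j; exact: minf_ex.
have gdd : forall i j, i <= j -> j <= N -> d (g j) (g i) = j - i.
  by move=> i j hij hj; rewrite ds gd.
have fj : forall j, j <= N -> f j <= j.
  move=> j hj; have := fle j 0 isT; rewrite -g0 gdd //; lia.
have fN : forall j, j <= N -> f j <= N - j.
  move=> j hj; have := fle j n (leqnn n); rewrite -gN gd //.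
have [j0 hj0 eD] := maxf_ex f N.
set D := maxf f N in eD *.
suff HD : D <= L + delta * (2 * c * delta + (2 * c * L + 4 * c * delta + 17)) + 2 * delta.
  move=> j hj; have [i hi e] := fex j; exists i => //; rewrite -e.
  exact: leq_trans (maxf_ge f hj) HD.
set j1 := j0 - 2 * D.
set j2 := minn N (j0 + 2 * D).
have ej1 : j1 = j0 - 2 * D by [].
have ej2 : j2 = minn N (j0 + 2 * D) by [].
clearbody j1 j2.
have hj1N : j1 <= N by lia.
have hj2N : j2 <= N by lia.
have [a ha ea] := fex j1.
have [b hb eb] := fex j2.
have l1D : f j1 <= D by exact: maxf_ge.
have l2D : f j2 <= D by exact: maxf_ge.
have f1 := fj j1 hj1N. have f0 := fj j0 hj0. have f2 := fN j2 hj2N. have f0' := fN j0 hj0.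
set w := g j0.
have dw1 : d w (g j1) = j0 - j1 by rewrite /w gdd //; lia.
have dw2 : d w (g j2) = j2 - j0 by rewrite /w ds gdd //; lia.
have d12 : d (g j1) (g j2) = j2 - j1 by rewrite gd //; lia.
have hDp : forall i, i <= n -> D <= d w (p i) by move=> i hi; rewrite eD; exact: fle.
have [c1 [c10 [c1N c1d]]] := go (g j1) (p a).
have [c2 [c20 [c2N c2d]]] := go (p b) (g j2).
set l1 := d (g j1) (p a) in c1N c1d ea.
set l2 := d (p b) (g j2) in c2N c2d.
have el2 : f j2 = l2 by rewrite eb /l2 ds.
have dab : d (p a) (p b) <= 6 * D.
  have x1 : d (p a) (g j1) = l1 by rewrite /l1 ds.
  have x2 : d (g j2) (p b) = l2 by rewrite /l2 ds.
  have := dt (p a) (g j1) (p b); have := dt (g j1) (g j2) (p b).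
  rewrite x1 x2 d12; lia.
set M := l1 + l2 + ((b - a) + (a - b)).
have hM : M <= c * D.
  have : (b - a) + (a - b) <= mu * (6 * D).
    case: (leqP a b) => hab.
      have := hq a b hab hb; have := leq_mul (leqnn mu) dab; lia.
    have := hq b a (ltnW hab) ha; rewrite ds; have := leq_mul (leqnn mu) dab; lia.
  rewrite /M /c; lia.
have [k [hk1 hk2]] := pow2_ex M.
have P1 : 2 * D <= gp d (g j1) (p a) w + 2 * L + 2 * delta * k.
  rewrite -c10 -c1N; apply: path_gp => //.
  - by rewrite /M in hk1; lia.
  - by move=> i hi; rewrite c1d //; lia.
  move=> i hi; have := dt w (c1 i) (g j1).
  rewrite dw1 -c10 (ds (c1 i)) c1d //; lia.
have P3 : 2 * D <= gp d (p b) (g j2) w + 2 * L + 2 * delta * k.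
  rewrite -c20 -c2N; apply: path_gp => //.
  - by rewrite /M in hk1; lia.
  - by move=> i hi; rewrite c2d //; lia.
  move=> i hi; have := dt w (c2 i) (g j2).
  rewrite dw2 -c2N c2d //; lia.
have P2 : 2 * D <= gp d (p a) (p b) w + 2 * L + 2 * delta * k.
  have seg : forall u v, u <= v -> v <= n -> v - u <= 2 ^ k ->
      2 * D <= gp d (p u) (p v) w + 2 * L + 2 * delta * k.
    move=> u v huv hv hvu.
    have := @path_gp T d delta w L D k md fp (fun i => p (u + i)) (v - u) hvu.
    rewrite /= addn0 subnKC //; apply.
    - by move=> i hi; rewrite addnS; apply: hs; lia.
    - by move=> i hi; apply: hDp; lia.
  case: (leqP a b) => hab; first by apply: seg => //; rewrite /M in hk1; lia.
  rewrite gp_sym //; apply: seg => //; [lia | rewrite /M in hk1; lia].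
have Q1 := @gp_min T d delta (g j1) (p a) (p b) w
  (2 * D - (2 * L + 2 * delta * k)) md fp ltac:(lia) ltac:(lia).
have Q2 := @gp_min T d delta (g j1) (p b) (g j2) w
  (2 * D - (2 * L + 2 * delta * k) - 2 * delta) md fp ltac:(lia) ltac:(lia).
have gz : gp d (g j1) (g j2) w = 0 by rewrite /gp dw1 dw2 d12; lia.
rewrite gz in Q2.
have HD1 : D <= L + delta * k + 2 * delta by lia.
have Hk : k * k <= (2 * c * delta) * k + (2 * c * L + 4 * c * delta + 17).
  have := pow2_sq k.
  have := leq_mul (leqnn c) HD1.
  move=> h1 h2; clear -h1 h2 hk2 hM.
  lia.
have := sq_bound Hk => hk.
have := leq_mul (leqnn delta) hk.
clear -HD1; lia.
Qed.
Local Open Scope group_scope.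

Ltac gen_c c := repeat match goal with |- context [c ?a ?b] =>
  let z := fresh "z" in set z := c a b; clearbody z end.

Ltac fin_c c := repeat match goal with
  | H : @eq ?T _ _ |- _ => unify T int; revert H
  | H : is_true (@Order.le _ _ _ _) |- _ => revert H
  end; gen_c c; lia.

Definition cocyc_ok (G : groupType) (c : G -> G -> int) :=
  (forall x y, (0 <= c x y)%R) /\
  (forall x y z, (c x y + c (x * y)%g z = c y z + c x (y * z)%g)%R) /\
  (forall x, c 1 x = 0%R) /\ (forall x, c x 1 = 0%R).

Lemma cxs_le (G : groupType) (c : G -> G -> int) x s :
  cocyc_ok c -> (c x s <= c s s^-1%g)%R.
Proof.
move=> [h0 [hc [h1 h2]]]; have := hc x s s^-1; rewrite mulgV h2.
have := h0 (x * s) s^-1; lia.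
Qed.

Lemma csx_le (G : groupType) (c : G -> G -> int) x s :
  cocyc_ok c -> (c s x <= c s^-1%g s)%R.
Proof.
move=> [h0 [hc [h1 h2]]]; have := hc s^-1 s x; rewrite mulVg h1.
have := h0 s^-1 (s * x); lia.
Qed.

Lemma e_inv (G : groupType) (c : G -> G -> int) s :
  cocyc_ok c -> c s^-1 (s^-1)^-1 = c s s^-1.
Proof.
move=> [h0 [hc [h1 h2]]]; have := hc s s^-1 s; rewrite mulgV mulVg h1 h2 invgK; lia.
Qed.

Lemma e_mul (G : groupType) (c : G -> G -> int) x y :
  cocyc_ok c -> (c (x * y)%g (x * y)^-1%g <= c x x^-1%g + c y y^-1%g)%R.
Proof.
move=> [h0 [hc [h1 h2]]].
have K1 := hc x y y^-1. rewrite mulgV h2 in K1.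
have K2 := hc (x * y) y^-1 x^-1. rewrite mulgK -invgM in K2.
have := h0 x y; have := h0 y^-1 x^-1. move: K1 K2. gen_c c. lia.
Qed.

Lemma t_ident (G : groupType) (c : G -> G -> int) g h :
  cocyc_ok c -> c h^-1 g^-1 =
   (c g g^-1%g + c h h^-1%g - c (g * h)%g (g * h)^-1%g - c g h)%R.
Proof.
move=> [h0 [hc [h1 h2]]].
have K1 := hc g h h^-1. rewrite mulgV h2 in K1.
have K2 := hc (g * h) h^-1 g^-1. rewrite mulgK -invgM in K2.
fin_c c.
Qed.

Lemma tri_main (G : groupType) (c : G -> G -> int) a1 b1 a2 b2 a3 b3 :
  cocyc_ok c -> c a1 b1 = 0%R -> c a2 b2 = 0%R -> c a3 b3 = 0%R ->
  a3 * b3 = (a1 * b1 * (a2 * b2))^-1 ->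
  (c (a2 * b2)^-1%g (a1 * b1)^-1%g <= c (a1 * b1)%g (a2 * b2)%g
     + c (b1 * a2)%g (b1 * a2)^-1%g + c (b1 * a2)^-1%g (b1 * a2)%g
     + c (b3 * a1)^-1%g (b3 * a1)%g)%R.
Proof.
move=> hok z1 z2 z3 hk.
have [h0 [hc [h1 h2]]] := hok.
have I1 := hc (a1 * b1) a2 b2.
have I2 := hc a1 b1 a2.
have I3 := hc b1 b1^-1 (b1 * a2). rewrite mulgV mulKg h1 in I3.
have I4 := cxs_le b1^-1 (b1 * a2) hok.
have N1 := h0 (a1 * b1 * a2) b2. have N2 := h0 a1 (b1 * a2).
rewrite (invgM a2 b2) (invgM a1 b1).
have J1 := hc (b2^-1 * a2^-1) b1^-1 a1^-1.
have J2 := hc b2^-1 a2^-1 b1^-1.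
have J3 := hc (a2^-1 * b1^-1) b1 b1^-1. rewrite mulgV h2 mulgVK in J3.
have N3 := h0 (a2^-1 * b1^-1) b1.
have J4 : (c b2^-1%g (a2^-1 * b1^-1)%g <= c (b1 * a2)^-1%g (b1 * a2)%g)%R.
  by rewrite -invgM; have := cxs_le b2^-1 (b1 * a2)^-1 hok; rewrite invgK.
have N4 := h0 b2^-1 a2^-1. have N5 := h0 b1^-1 a1^-1.
have e5 : b2^-1 * a2^-1 * b1^-1 = a3 * (b3 * a1).
  by rewrite mulgA hk !invgM !mulgA mulgVK.
have e6 : a1^-1 = (b3 * a1)^-1 * b3 by rewrite invgM mulgVK.
have J5 : (c (b2^-1 * a2^-1 * b1^-1)%g a1^-1%g <= c (b3 * a1)^-1%g (b3 * a1)%g)%R.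
  rewrite e5 e6.
  have K5 := hc (a3 * (b3 * a1)) (b3 * a1)^-1 b3. rewrite mulgK z3 in K5.
  have K6 := cxs_le (a3 * (b3 * a1)) (b3 * a1)^-1 hok. rewrite invgK in K6.
  have N6 := h0 (b3 * a1)^-1 b3.
  fin_c c.
fin_c c.
Qed.

Lemma wl_uniq (G : groupType) (S : seq G) g n m :
  word_length S g n -> word_length S g m -> n = m.
Proof.
move=> [[w [hw [sw pw]]] hn] [[v [hv [sv pv]]] hm].
have := hn v hv pv; have := hm w hw pw; lia.
Qed.

Lemma wd_inv (G : groupType) (S : seq G) (d : G -> G -> nat) :
  (forall a b, cayley_dist S a b (d a b)) -> forall a b, d a b = d 1 (a^-1 * b).
Proof.
move=> hd a b; apply: (wl_uniq (hd a b)).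
by have := hd 1 (a^-1 * b); rewrite /cayley_dist invg1 mul1g.
Qed.

Lemma wd_word (G : groupType) (S : seq G) (d : G -> G -> nat) :
  (forall a b, cayley_dist S a b (d a b)) -> forall g,
  exists w : seq G, all (fun s => s \in S) w /\ size w = d 1 g /\ \prod_(s <- w) s = g.
Proof.
move=> hd g; have [[w [hw [sw pw]]] _] := hd 1 g.
by exists w; rewrite pw invg1 mul1g.
Qed.

Lemma wd_le (G : groupType) (S : seq G) (d : G -> G -> nat) :
  (forall a b, cayley_dist S a b (d a b)) -> forall w : seq G,
  all (fun s => s \in S) w -> d 1 (\prod_(s <- w) s) <= size w.
Proof.
move=> hd w hw; have [_ hm] := hd 1 (\prod_(s <- w) s).
by apply: hm; rewrite // invg1 mul1g.
Qed.

Lemma wd_tri (G : groupType) (S : seq G) (d : G -> G -> nat) :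
  (forall a b, cayley_dist S a b (d a b)) -> forall a b c, d a c <= d a b + d b c.
Proof.
move=> hd a b c; rewrite (wd_inv hd a b) (wd_inv hd b c) (wd_inv hd a c).
have [w [hw [sw pw]]] := wd_word hd (a^-1 * b).
have [v [hv [sv pv]]] := wd_word hd (b^-1 * c).
have := wd_le hd (w := w ++ v); rewrite all_cat hw hv big_cat /= pw pv size_cat sw sv.
by rewrite mulgA mulgK; apply.
Qed.

Lemma wd_refl (G : groupType) (S : seq G) (d : G -> G -> nat) :
  (forall a b, cayley_dist S a b (d a b)) -> forall a, d a a = 0.
Proof.
move=> hd a; rewrite (wd_inv hd) mulVg.
have := wd_le hd (w := [::]) isT; rewrite big_nil.
by rewrite leqn0 => /eqP.
Qed.

Lemma wd_sym (G : groupType) (S : seq G) (d : G -> G -> nat) :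
  (forall a b, cayley_dist S a b (d a b)) -> (forall s, s \in S -> s^-1 \in S) ->
  forall a b, d a b <= d b a.
Proof.
move=> hd hS a b; rewrite (wd_inv hd a b) (wd_inv hd b a).
have [w [hw [sw pw]]] := wd_word hd (b^-1 * a).
have := wd_le hd (w := map (fun s => s^-1) (rev w)).
rewrite big_map size_map size_rev sw prodgV revK pw invgM invgK; apply.
rewrite all_map; apply/allP => s; rewrite mem_rev => hs /=.
by apply: hS; move/allP: hw; apply.
Qed.

Lemma wd_metric (G : groupType) (S : seq G) (d : G -> G -> nat) :
  (forall a b, cayley_dist S a b (d a b)) -> (forall s, s \in S -> s^-1 \in S) ->
  metric_ok d.
Proof.
move=> hd hS; split; first exact: wd_refl.
split; last exact: wd_tri.
by move=> a b; apply/eqP; rewrite eqn_leq !(wd_sym hd hS).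
Qed.

Lemma wd_fp (G : groupType) (S : seq G) (d : G -> G -> nat) delta :
  (forall a b, cayley_dist S a b (d a b)) -> four_point S delta -> fp_ok d delta.
Proof. by move=> hd fp x y z u; apply: fp. Qed.

Lemma wd_geod (G : groupType) (S : seq G) (d : G -> G -> nat) :
  (forall a b, cayley_dist S a b (d a b)) -> (forall s, s \in S -> s^-1 \in S) ->
  geod_ok d.
Proof.
move=> hd hS x y.
have [w [hw [sw pw]]] := wd_word hd (x^-1 * y).
rewrite -(wd_inv hd) in sw.
exists (fun i => x * \prod_(s <- take i w) s); split; first by rewrite take0 big_nil mulg1.
split; first by rewrite -sw take_size pw mulVKg.
have md := wd_metric hd hS; have [d0 [ds dt]] := md.
move=> i j hij hj.
have up : forall i j, i <= j -> j <= d x y ->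
    d (x * \prod_(s <- take i w) s) (x * \prod_(s <- take j w) s) <= j - i.
  move=> i' j' hij' hj'.
  rewrite (wd_inv hd) invgM mulgA mulgVK.
  rewrite -(subnKC hij') takeD big_cat /= mulgA mulVg mul1g.
  have := wd_le hd (w := take (j' - i') (drop i' w)).
  rewrite size_take size_drop; move=> h; apply: leq_trans (h _) _.
    by apply/allP=> s /mem_take /mem_drop hs; move/allP: hw; apply.
  by case: ifP => [_|/negbT]; rewrite ?ltnNge ?negbK; lia.
apply/eqP; rewrite eqn_leq up //=.
have := dt x (x * \prod_(s <- take i w) s) y.
have := dt (x * \prod_(s <- take i w) s) (x * \prod_(s <- take j w) s) y.
have := up 0 i isT (leq_trans hij hj).
have := up j (d x y) hj (leqnn _).
have ex1 : x * \prod_(s <- take (d x y) w) s = y by rewrite -sw take_size pw mulVKg.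
rewrite take0 big_nil mulg1 ex1.
set P := x * \prod_(s <- take i w) s. set Q := x * \prod_(s <- take j w) s. lia.
Qed.

Lemma choice2 (A B : Type) (P : A -> A -> B -> Prop) :
  (forall x y, exists b, P x y b) -> exists f : A -> A -> B, forall x y, P x y (f x y).
Proof.
move=> H; exists (fun x y => proj1_sig (constructive_indefinite_description _ (H x y))).
by move=> x y; case: (constructive_indefinite_description _ _).
Qed.


Lemma ce_iota0 (E G : groupType) (iota : int -> E) (pi : E -> G) :
  central_extension iota pi -> iota 0%R = 1.
Proof.
move=> [iA _]; have := iA 0%R 0%R; rewrite addr0 => h.
by apply: (mulIg (iota 0%R)); rewrite -h mul1g.
Qed.

Lemma ce_iotaD (E G : groupType) (iota : int -> E) (pi : E -> G) a b :
  central_extension iota pi -> iota (a + b)%R = iota a * iota b.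
Proof. by move=> [iA _]. Qed.

Lemma ce_iotaN (E G : groupType) (iota : int -> E) (pi : E -> G) n :
  central_extension iota pi -> iota (- n)%R = (iota n)^-1.
Proof.
move=> hce; apply: (mulIg (iota n)); rewrite mulVg -(ce_iotaD _ _ hce).
by rewrite addNr (ce_iota0 hce).
Qed.

Lemma ce_inj (E G : groupType) (iota : int -> E) (pi : E -> G) a b :
  central_extension iota pi -> iota a = iota b -> a = b.
Proof. by move=> [_ [hi _]]; apply: hi. Qed.

Lemma ce_cent (E G : groupType) (iota : int -> E) (pi : E -> G) n e :
  central_extension iota pi -> iota n * e = e * iota n.
Proof. by move=> [_ [_ [hc _]]]. Qed.

Lemma ce_piM (E G : groupType) (iota : int -> E) (pi : E -> G) e f :
  central_extension iota pi -> pi (e * f) = pi e * pi f.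
Proof. by move=> [_ [_ [_ [hm _]]]]. Qed.

Lemma ce_pi1 (E G : groupType) (iota : int -> E) (pi : E -> G) :
  central_extension iota pi -> pi 1 = 1.
Proof.
move=> hce; have := ce_piM 1 1 hce; rewrite mulg1 => h.
by apply: (mulIg (pi 1)); rewrite -h mul1g.
Qed.

Lemma ce_piV (E G : groupType) (iota : int -> E) (pi : E -> G) e :
  central_extension iota pi -> pi e^-1 = (pi e)^-1.
Proof.
move=> hce; apply: (mulgI (pi e)); rewrite -(ce_piM _ _ hce) !mulgV.
exact: ce_pi1 hce.
Qed.

Lemma ce_ker (E G : groupType) (iota : int -> E) (pi : E -> G) e :
  central_extension iota pi -> pi e = 1 -> exists n, e = iota n.
Proof. by move=> [_ [_ [_ [_ [_ hk]]]]] /hk. Qed.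

Lemma ce_piiota (E G : groupType) (iota : int -> E) (pi : E -> G) n :
  central_extension iota pi -> pi (iota n) = 1.
Proof. by move=> [_ [_ [_ [_ [_ hk]]]]]; apply/hk; exists n. Qed.

Lemma ce_piw (X : Type) (E G : groupType) (iota : int -> E) (pi : E -> G) (ev : X -> E) w :
  central_extension iota pi ->
  pi (word_eval ev w) = \prod_(x <- w) pi (ev x).
Proof.
move=> hce; rewrite /word_eval; elim: w => [|x w IH]; first by rewrite !big_nil (ce_pi1 hce).
by rewrite !big_cons (ce_piM _ _ hce) IH.
Qed.

Lemma word_eval_cat (X : Type) (E : groupType) (ev : X -> E) w1 w2 :
  word_eval ev (w1 ++ w2) = word_eval ev w1 * word_eval ev w2.
Proof. by rewrite /word_eval big_cat. Qed.

Lemma weighted_cat (X : Type) (E G : groupType) (iota : int -> E) (pi : E -> G) (ev : X -> E) C w1 w2 :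
  central_extension iota pi ->
  weighted ev iota C (w1 ++ w2) = weighted ev iota C w1 * weighted ev iota C w2.
Proof.
move=> hce; rewrite /weighted word_eval_cat size_cat.
have -> : (- (C * (size w1 + size w2))%N%:Z = - (C * size w1)%N%:Z + - (C * size w2)%N%:Z)%R.
  by rewrite mulnDr PoszD opprD.
rewrite (ce_iotaD _ _ hce) !mulgA; congr (_ * _).
by rewrite -!mulgA (ce_cent _ _ hce).
Qed.

Lemma fle_eq (E G : groupType) (iota : int -> E) (pi : E -> G) a b :
  central_extension iota pi -> fibre_le iota a b ->
  exists n, (0 <= n)%R /\ b = a * iota n.
Proof.
move=> hce [n [hn e]]; exists n; split => //.
by rewrite -(ce_cent n a hce) -e mulgVK.
Qed.

Lemma rho_coc (X : Type) (E G : groupType) (iota : int -> E) (pi : E -> G) (ev : X -> E) C rho :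
  central_extension iota pi -> (forall g, is_rho ev iota pi C g (rho g)) ->
  exists c : G -> G -> int, (forall x y, rho (x * y) = rho x * rho y * iota (c x y)) /\
    (forall x y, (0 <= c x y)%R).
Proof.
move=> hce hrho.
have := @choice2 G int (fun x y n => rho (x * y) = rho x * rho y * iota n /\ (0 <= n)%R).
case=> [x y|c hc]; last by exists c; split=> x y; case: (hc x y).
have [[wx [px ex]] _] := hrho x; have [[wy [py ey]] _] := hrho y.
have [_ hm] := hrho (x * y).
have := hm (wx ++ wy); rewrite word_eval_cat (ce_piM _ _ hce) px py => /(_ erefl).
move=> /(fle_eq hce) [n [hn e]]; exists n; split => //.
by rewrite e (weighted_cat _ _ _ _ hce) ex ey.
Qed.

Lemma coc_id (E G : groupType) (iota : int -> E) (pi : E -> G) (rho : G -> E) (c : G -> G -> int) :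
  central_extension iota pi -> (forall x y, rho (x * y) = rho x * rho y * iota (c x y)) ->
  forall x y z, (c x y + c (x * y)%g z = c y z + c x (y * z)%g)%R.
Proof.
move=> hce hc x y z.
have h1 : rho (x * y * z) = rho x * rho y * rho z * iota (c x y + c (x * y)%g z)%R.
  rewrite hc hc (ce_iotaD _ _ hce) !mulgA; congr (_ * _).
  by rewrite -!mulgA (ce_cent _ _ hce).
have h2 : rho (x * (y * z)) = rho x * rho y * rho z * iota (c y z + c x (y * z)%g)%R.
  by rewrite hc hc (ce_iotaD _ _ hce) !mulgA.
apply: (ce_inj hce); apply: (@mulgI _ (rho x * rho y * rho z)).
by rewrite -h1 -h2 mulgA.
Qed.

Lemma rho_one (X : finType) (E G : groupType) (iota : int -> E) (pi : E -> G) (ev : X -> E) C rho (lam : rat) :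
  central_extension iota pi -> (forall g, is_rho ev iota pi C g (rho g)) ->
  (forall w, pi (word_eval ev w) = 1 -> weighted ev iota C w = rho 1 -> quasigeodesic ev pi lam w) ->
  rho 1 = 1.
Proof.
move=> hce hrho hq.
have [[w [pw ew]] _] := hrho 1.
have hcd : cayley_dist [seq pi (ev x) | x <- enum X] 1 1 0.
  rewrite /cayley_dist invg1 mulg1; split; first by exists [::]; rewrite big_nil.
  by [].
have := hq w pw ew 0 (size w) isT (leqnn _) 0.
rewrite take0 take_size pw /word_eval big_nil (ce_pi1 hce) => /(_ hcd) [h _].
move: h; rewrite mulr0 subn0 lern0 size_eq0 => /eqP wE.
by rewrite -ew wE /weighted /word_eval big_nil mul1g muln0 oppr0 (ce_iota0 hce).
Qed.

Lemma rho_split (X : Type) (E G : groupType) (iota : int -> E) (pi : E -> G) (ev : X -> E) C rho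
   (c : G -> G -> int) w g i :
  central_extension iota pi -> (forall g, is_rho ev iota pi C g (rho g)) ->
  (forall x y, rho (x * y) = rho x * rho y * iota (c x y)) -> (forall x y, (0 <= c x y)%R) ->
  pi (word_eval ev w) = g -> weighted ev iota C w = rho g ->
  pi (word_eval ev (take i w)) * pi (word_eval ev (drop i w)) = g /\
  c (pi (word_eval ev (take i w))) (pi (word_eval ev (drop i w))) = 0%R.
Proof.
move=> hce hrho hc hc0 pw ew.
set a := pi (word_eval ev (take i w)); set b := pi (word_eval ev (drop i w)).
have eab : a * b = g by rewrite -(ce_piM _ _ hce) -word_eval_cat cat_take_drop.
split => //.
have [_ ha] := hrho a; have [_ hb] := hrho b.
have [n1 [hn1 e1]] := fle_eq hce (ha (take i w) erefl).
have [n2 [hn2 e2]] := fle_eq hce (hb (drop i w) erefl).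
have ew' : weighted ev iota C w =
    weighted ev iota C (take i w) * weighted ev iota C (drop i w).
  by rewrite -(weighted_cat _ _ _ _ hce) cat_take_drop.
have := hc a b; rewrite e1 e2 eab -ew ew'.
set wA := weighted ev iota C (take i w); set wB := weighted ev iota C (drop i w).
have -> : wA * iota n1 * (wB * iota n2) * iota (c a b) = wA * wB * iota (n1 + n2 + c a b)%R.
  rewrite !(ce_iotaD _ _ hce) -(mulgA wA) (ce_cent n1 (wB * iota n2) hce) !mulgA.
  by rewrite -(mulgA _ (iota n2)) (ce_cent n2 (iota n1) hce) !mulgA.
move=> /(congr1 (fun z => (wA * wB)^-1 * z)); rewrite mulKg mulVg.
rewrite -(ce_iota0 hce) => /(ce_inj hce) h.
have := hc0 a b; lia.
Qed.

Lemma ex_min_nat (P : nat -> Prop) : (exists n, P n) -> exists n, P n /\ forall m, P m -> n <= m.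
Proof.
move=> [n Pn]; apply: NNPP => H.
suff : forall k m, m <= k -> ~ P m by move/(_ n n (leqnn n)).
elim=> [|k IH] m hm Pm; apply: H; exists m; split=> // m' Pm'.
  by move: hm; rewrite leqn0 => /eqP ->.
case: (leqP m m') => // h; exfalso; apply: (IH m') => //; lia.
Qed.

Lemma dist_ex (G : groupType) (S : seq G) :
  (forall g, exists w : seq G, all (fun s => s \in S) w /\ \prod_(s <- w) s = g) ->
  exists d : G -> G -> nat, forall a b, cayley_dist S a b (d a b).
Proof.
move=> hgen; apply: choice2 => a b.
have [n [[w [hw [sw pw]]] hmin]] := ex_min_nat (P := fun n => exists w : seq G,
   all (fun s => s \in S) w /\ size w = n /\ \prod_(s <- w) s = a^-1 * b)
   ltac:(have [w [hw pw]] := hgen (a^-1 * b); by exists (size w), w).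
exists n; split; first by exists w.
by move=> v hv pv; apply: hmin; exists v.
Qed.

Lemma wd_compare (G : groupType) (S1 S2 : seq G) (d1 d2 : G -> G -> nat) K :
  (forall a b, cayley_dist S1 a b (d1 a b)) -> (forall a b, cayley_dist S2 a b (d2 a b)) ->
  (forall s, s \in S2 -> d1 1 s <= K) -> forall a b, d1 a b <= K * d2 a b.
Proof.
move=> h1 h2 hK a b; rewrite (wd_inv h1) (wd_inv h2).
have [w [hw [sw pw]]] := wd_word h2 (a^-1 * b).
rewrite -sw -pw; clear sw pw.
elim: w hw => [|s w IH] /=; first by rewrite big_nil (wd_refl h1).
move=> /andP [hs hw]; rewrite big_cons.
have := wd_tri h1 1 s (s * \prod_(s0 <- w) s0).
rewrite [d1 s _](wd_inv h1) mulKg.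
have := IH hw; have := hK s hs.
set u := d1 1 (s * _); set v := d1 1 (\prod_(s0 <- w) s0). lia.
Qed.

Lemma wd_transl (G : groupType) (S : seq G) (d : G -> G -> nat) x a b :
  (forall a b, cayley_dist S a b (d a b)) -> d (x * a) (x * b) = d a b.
Proof.
by move=> h; rewrite (wd_inv h) [RHS](wd_inv h) invgM -mulgA mulKg.
Qed.

Lemma gchain_rev (T : Type) (d : T -> T -> nat) g x y :
  metric_ok d -> gchain d g x y -> gchain d (fun j => g (d x y - j)) y x.
Proof.
move=> [d0 [ds dt]] [g0 [gN gd]].
rewrite /gchain (ds y x); split; first by rewrite subn0.
split; first by rewrite subnn.
move=> i j hij hj; rewrite ds gd; lia.
Qed.

Lemma e_word (G : groupType) (c : G -> G -> int) (S : seq G) (K : int) :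
  cocyc_ok c -> (forall s, s \in S -> (c s s^-1%g <= K)%R) ->
  forall w, all (fun s => s \in S) w ->
  (c (\prod_(s <- w) s)%g ((\prod_(s <- w) s)^-1)%g <= (size w)%:Z * K)%R.
Proof.
move=> hok hK; elim=> [|s w IH] /=.
  by rewrite big_nil invg1 mul0r; case: hok => _ [_ [-> _]].
move=> /andP [hs hw]; rewrite big_cons.
have := e_mul s (\prod_(s0 <- w) s0) hok.
have := IH hw; have := hK s hs.
rewrite -addn1 PoszD mulrDl mul1r.
gen_c c; set m := ((size w)%:Z * K)%R; lia.
Qed.

Lemma avg_unpack (E G : groupType) (iota : int -> E) (pi : E -> G) (rho : G -> E)
   (c : G -> G -> int) x q :
  central_extension iota pi -> rho 1 = 1 ->
  (forall x y, rho (x * y) = rho x * rho y * iota (c x y)) ->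
  EQ_average iota (EinEQ (rho x)) (EinEQ ((rho x^-1)^-1)) q ->
  exists m, q.1 = (rho x^-1)^-1 * iota (- m)%R /\
    q.2 = ((- c x (x^-1)%g)%:~R / 2 + m%:~R)%R.
Proof.
move=> hce rho1 hc [r [[n1 [e1 f1]] [n2 [e2 f2]]]].
move: e1 f1 e2 f2; rewrite /EQ_mul /EQ_inv /iotaQ /EinEQ /= invg1 mul1g invgK.
move=> e1 f1 e2 f2.
have hn1 : n1 = (- c x (x^-1)%g)%R.
  apply: (ce_inj hce); rewrite -e1 (ce_iotaN _ hce).
  have := hc x x^-1; rewrite mulgV rho1 => /(congr1 (fun z => z * (iota (c x x^-1))^-1)).
  by rewrite mulgK mul1g.
exists n2; split.
  rewrite mulg1 in e2.
  by rewrite (ce_iotaN _ hce) -e2 (invgM q.1^-1) (invgK q.1) mulgA mulgV mul1g.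
move: f1 f2; rewrite hn1 => f1 f2; lra.
Qed.

Lemma mul_iota (E G : groupType) (iota : int -> E) (pi : E -> G) u v a b :
  central_extension iota pi -> (u * iota a) * (v * iota b) = (u * v) * iota (a + b)%R.
Proof.
move=> hce; rewrite (ce_iotaD _ _ hce) !mulgA; congr (_ * _).
by rewrite -mulgA (ce_cent a v hce) mulgA.
Qed.

Lemma inv_iota (E G : groupType) (iota : int -> E) (pi : E -> G) u a :
  central_extension iota pi -> (u * iota a)^-1 = u^-1 * iota (- a)%R.
Proof.
move=> hce; rewrite invgM -(ce_iotaN _ hce); exact: (ce_cent _ _ hce).
Qed.

Lemma sig_prod (E G : groupType) (iota : int -> E) (pi : E -> G) (rho : G -> E)
   (c : G -> G -> int) g h m1 m2 m3 :
  central_extension iota pi ->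
  (forall x y, rho (x * y) = rho x * rho y * iota (c x y)) ->
  ((rho (g * h)^-1)^-1 * iota (- m3)%R)^-1 * ((rho g^-1)^-1 * iota (- m1)%R)
    * ((rho h^-1)^-1 * iota (- m2)%R)
  = iota (c (h^-1)%g (g^-1)%g + (- - m3 + - m1 + - m2))%R.
Proof.
move=> hce hc.
rewrite (inv_iota _ _ hce) invgK (mul_iota _ _ _ _ hce) (mul_iota _ _ _ _ hce).
rewrite [RHS](ce_iotaD _ _ hce); congr (_ * _).
rewrite invgM hc -!mulgA (ce_cent _ _ hce) !mulgA.
by rewrite mulgK mulgV mul1g.
Qed.

Theorem proposition3p4
  (E G : groupType) (iota : int -> E) (pi : E -> G)
  (X : finType) (ev : X -> E) (C : nat) (rho : G -> E) :
  word_hyperbolic G ->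
  central_extension iota pi ->
  (* ev(X) is a symmetric generating set of E *)
  (forall x : X, exists y : X, ev y = (ev x)^-1) ->
  (forall e : E, exists w : seq X, word_eval ev w = e) ->
  (0 < C)%N ->
  (* rho g is the maximum, which exists for every g *)
  (forall g : G, is_rho ev iota pi C g (rho g)) ->
  (exists lambda : rat, (0 < lambda)%R /\
     forall (g : G) (w : seq X), pi (word_eval ev w) = g ->
       weighted ev iota C w = rho g -> quasigeodesic ev pi lambda w) ->
  exists M : rat, forall (g h : G) (qg qh qgh : E * rat) (t : rat),
    EQ_average iota (EinEQ (rho g)) (EinEQ ((rho g^-1)^-1)) qg ->
    EQ_average iota (EinEQ (rho h)) (EinEQ ((rho h^-1)^-1)) qh ->
    EQ_average iota (EinEQ (rho (g * h))) (EinEQ ((rho (g * h)^-1)^-1)) qgh ->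
    EQ_eq iota (iotaQ E t) (EQ_mul (EQ_mul (EQ_inv qgh) qg) qh) ->
    (`|t| <= M)%R.
Proof.
move=> [S' [[hSsym hSgen] [delta hfp]]] hce hevsym hevgen hC hrho [lam [hlam hqg]].
have [dP hdP] := dist_ex hSgen.
set SX := [seq pi (ev x) | x <- enum X].
have hSXgen : forall g, exists w : seq G, all (fun s => s \in SX) w /\ \prod_(s <- w) s = g.
  move=> g; have [_ [_ [_ [_ [hsurj _]]]]] := hce.
  have [e he] := hsurj g; have [w hw] := hevgen e.
  exists [seq pi (ev x) | x <- w]; split.
    by apply/allP => s /mapP [x _ ->]; apply: map_f; rewrite mem_enum.
  by rewrite big_map -(ce_piw _ _ hce) hw he.
have [dX hdX] := dist_ex hSXgen.
have mdP := wd_metric hdP hSsym.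
have fpP := wd_fp hdP hfp.
have goP := wd_geod hdP hSsym.
have [d0 [ds dt]] := mdP.
set L1 := \max_(s <- S') dX 1%g s.
have hL1 : forall a b, dX a b <= L1 * dP a b.
  apply: (wd_compare hdX hdP) => s hs.
  exact: (@leq_bigmax_seq _ S' xpredT (fun s => dX 1%g s) s hs isT).
set L2 := \max_(x : X) dP 1%g (pi (ev x)).
have [mu hmu] : exists mu : nat, (lam <= mu%:R)%R.
  by exists (Num.bound lam); apply: ltW; apply: archi_boundP; apply: ltW.
pose path (x0 : G) (w : seq X) i := x0 * pi (word_eval ev (take i w)).
have path0 : forall x0 w, path x0 w 0 = x0.
  by move=> x0 w; rewrite /path take0 /word_eval big_nil (ce_pi1 hce) mulg1.
have pathN : forall x0 w, path x0 w (size w) = x0 * pi (word_eval ev w).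
  by move=> x0 w; rewrite /path take_size.
have pathS : forall x0 w i, i < size w -> dP (path x0 w i) (path x0 w i.+1) <= L2.+1.
  move=> x0 w i hi; rewrite /path -addn1 takeD.
  case e: (drop i w) => [|x r]; first by move: hi; rewrite -subn_gt0 -size_drop e.
  rewrite /= take0 word_eval_cat (ce_piM _ _ hce) mulgA (wd_inv hdP) mulKg.
  rewrite /word_eval big_cons big_nil mulg1.
  apply: leq_trans (@leq_bigmax X (fun x => dP 1%g (pi (ev x))) x) _; exact: leqnSn.
have pathQ : forall x0 w g, pi (word_eval ev w) = g -> weighted ev iota C w = rho g ->
    forall i j, i <= j -> j <= size w -> j - i <= (mu * L1) * dP (path x0 w i) (path x0 w j).
  move=> x0 w g pw ew i j hij hj.
  have [hq _] := hqg g w pw ew i j hij hj _ (hdX _ _).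
  set dd := dX _ _ in hq.
  have h1 : j - i <= mu * dd.
    rewrite -(@ler_nat rat) natrM; apply: le_trans hq _.
    by apply: ler_wpM2r => //; exact: ler0n.
  rewrite /path (wd_transl _ _ _ hdP).
  have := hL1 (pi (word_eval ev (take i w))) (pi (word_eval ev (take j w))).
  rewrite -/dd => h2; apply: leq_trans h1 _; rewrite -mulnA leq_mul2l h2 orbT.
  done.
have [Dm hDm] := @morse1 _ dP delta L2.+1 (mu * L1) mdP fpP goP isT.
have morse_at : forall x0 w g' y gam j, pi (word_eval ev w) = g' ->
    weighted ev iota C w = rho g' -> x0 * g' = y -> gchain dP gam x0 y ->
    j <= dP x0 y -> exists2 i', i' <= size w & dP (gam j) (path x0 w i') <= Dm.
  move=> x0 w g' y gam j pw ew ey hg hj.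
  apply: (hDm (path x0 w) (size w) gam (pathS x0 w) (pathQ x0 w g' pw ew)).
    by rewrite path0 pathN pw ey.
  by rewrite path0 pathN pw ey.
have [c [hc hc0]] := rho_coc hce hrho.
have hcid := coc_id hce hc.
have rho1 := rho_one hce hrho (hqg 1).
have c1l : forall x, c 1 x = 0%R.
  move=> x; have := hc 1 x; rewrite mul1g rho1 mul1g.
  move=> /(congr1 (fun z => (rho x)^-1 * z)); rewrite mulVg mulKg -(ce_iota0 hce).
  by move=> /(ce_inj hce) ->.
have c1r : forall x, c x 1 = 0%R.
  move=> x; have := hc x 1; rewrite mulg1 rho1 mulg1.
  move=> /(congr1 (fun z => (rho x)^-1 * z)); rewrite mulVg mulKg -(ce_iota0 hce).
  by move=> /(ce_inj hce) ->.
have hok : cocyc_ok c by split; [|split; [|split]].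
set Emax := \max_(s <- S') `|c s (s^-1)%g|%N.
have hE : forall s, s \in S' -> (c s (s^-1)%g <= (Posz Emax))%R.
  move=> s hs.
  have := @leq_bigmax_seq _ S' xpredT (fun s => `|c s (s^-1)%g|%N) s hs isT.
  rewrite -/Emax; have := hc0 s s^-1; set z := c s s^-1; lia.
have hball : forall s R, dP 1 s <= R -> (c s (s^-1)%g <= (Posz (R * Emax)))%R.
  move=> s R hR; have [w [hw [sw pw]]] := wd_word hdP s.
  have := e_word hok hE hw; rewrite pw sw => h; apply: le_trans h _.
  by rewrite -PoszM lez_nat leq_mul2r hR orbT.
set R := Dm + (4 * delta + 1) + Dm.
set K := (Posz (R * Emax)).
have claim : forall g h, (c (h^-1)%g (g^-1)%g <= c g h + K + K + K)%R.
  move=> g h.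
  have [[wg [pg eg]] _] := hrho g.
  have [[wh [ph eh]] _] := hrho h.
  have [[wk [pk ek]] _] := hrho (g * h)^-1.
  have [g1 hg1] := goP 1 g. have [g2 hg2] := goP g (g * h).
  have [g3 hg3] := goP (g * h) 1.
  have t1 := dt 1 g (g * h). have t2 := dt g 1 (g * h). have t3 := dt 1 (g * h) g.
  rewrite (ds g 1) in t2. rewrite (ds (g * h) g) in t3.
  have e3 : dP 1 (g * h) = dP (g * h) 1 by rewrite ds.
  set D1 := dP 1 g in t1 t2 t3 *. set D2 := dP g (g * h) in t1 t2 t3 *.
  set D3 := dP (g * h) 1 in e3 *. rewrite e3 in t1 t2 t3.
  set i := (D1 + D3 - D2)./2.
  have hpar := odd_double_half (D1 + D3 - D2).
  rewrite -/i -muln2 in hpar.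
  have hb : (odd (D1 + D3 - D2) : nat) <= 1 by case: odd.
  set b := (odd (D1 + D3 - D2) : nat) in hpar hb.
  have TO := tripod_gt (j := i) mdP fpP hg1 (gchain_rev mdP hg3) ltac:(lia) ltac:(rewrite e3; lia)
    ltac:(rewrite e3; lia).
  have TP := tripod_gt (j := D1 - i) mdP fpP (gchain_rev mdP hg1) hg2
    ltac:(rewrite ds; lia) ltac:(lia) ltac:(rewrite (ds g 1) e3; lia).
  rewrite -/D1 subKn in TP; last by lia.
  have [i1 hi1 m1] := morse_at 1 wg g g g1 i pg eg (mul1g g) hg1 ltac:(lia).
  have [i2 hi2 m2] := morse_at g wh h (g * h) g2 (D1 - i) ph eh erefl hg2 ltac:(lia).
  have [i3 hi3 m3] := morse_at (g * h) wk (g * h)^-1 1 g3 (D3 - i) pk ek (mulgV _) hg3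
    ltac:(lia).
  have [ab1 z1] := rho_split i1 hce hrho hc hc0 pg eg.
  have [ab2 z2] := rho_split i2 hce hrho hc hc0 ph eh.
  have [ab3 z3] := rho_split i3 hce hrho hc hc0 pk ek.
  set a1 := pi (word_eval ev (take i1 wg)) in ab1 z1 m1.
  set b1 := pi (word_eval ev (drop i1 wg)) in ab1 z1.
  set a2 := pi (word_eval ev (take i2 wh)) in ab2 z2 m2.
  set b2 := pi (word_eval ev (drop i2 wh)) in ab2 z2.
  set a3 := pi (word_eval ev (take i3 wk)) in ab3 z3 m3.
  set b3 := pi (word_eval ev (drop i3 wk)) in ab3 z3.
  rewrite /path -/a1 in m1. rewrite /path -/a2 in m2. rewrite /path -/a3 in m3.
  have d12 : dP (1 * a1) (g * a2) <= R.
    have := dt (1 * a1) (g1 i) (g * a2); have := dt (g1 i) (g2 (D1 - i)) (g * a2).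
    rewrite (ds (1 * a1) (g1 i)); rewrite /R.
    move: m1 m2 TP; repeat (let u := fresh "u" in set u := dP _ _). lia.
  have d31 : dP ((g * h) * a3) (1 * a1) <= R.
    have := dt ((g * h) * a3) (g3 (D3 - i)) (1 * a1).
    have := dt (g3 (D3 - i)) (g1 i) (1 * a1).
    rewrite (ds ((g * h) * a3) (g3 (D3 - i))) (ds (g3 (D3 - i)) (g1 i)); rewrite /R.
    move: m1 m3 TO; repeat (let u := fresh "u" in set u := dP _ _). lia.
  have es1 : b1 * a2 = (1 * a1)^-1 * (g * a2).
    by rewrite mul1g mulgA -ab1 mulKg.
  have es3 : b3 * a1 = ((g * h) * a3)^-1 * (1 * a1).
    by rewrite mul1g invgM -ab3 !mulgA mulVg mul1g.
  have B1 : (c (b1 * a2)%g ((b1 * a2)^-1)%g <= K)%R.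
    by apply: hball; rewrite es1 -(wd_inv hdP).
  have B2 : (c ((b1 * a2)^-1)%g (b1 * a2)%g <= K)%R.
    have := e_inv (b1 * a2) hok; rewrite invgK => ->; exact: B1.
  have B3 : (c ((b3 * a1)^-1)%g (b3 * a1)%g <= K)%R.
    have := e_inv (b3 * a1) hok; rewrite invgK => ->.
    by apply: hball; rewrite es3 -(wd_inv hdP).
  have hk : a3 * b3 = (a1 * b1 * (a2 * b2))^-1 by rewrite ab1 ab2 ab3.
  have := tri_main hok z1 z2 z3 hk.
  rewrite ab1 ab2.
  move: B1 B2 B3; gen_c c; lia.
exists (K + K + K)%:~R%R.
move=> g h qg qh qgh t Hg Hh Hgh [n [et ft]].
have [m1 [q1g q2g]] := avg_unpack hce rho1 hc Hg.
have [m2 [q1h q2h]] := avg_unpack hce rho1 hc Hh.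
have [m3 [q1gh q2gh]] := avg_unpack hce rho1 hc Hgh.
move: et ft; rewrite /EQ_mul /EQ_inv /iotaQ /= invg1 mul1g q1g q1h q1gh.
rewrite (sig_prod g h m1 m2 m3 hce hc) => /(ce_inj hce) hn ft.
have hid := t_ident g h hok.
have cl1 := claim g h.
have cl2 := claim h^-1 g^-1. rewrite !invgK in cl2.
have hn' := congr1 (fun z : int => z%:~R : rat) hn.
have hid' := congr1 (fun z : int => z%:~R : rat) hid.
rewrite /= !intrD !intrN in hn' hid'.
rewrite !intrN in q2g q2h q2gh.
move: cl1 cl2; rewrite -!(ler_int rat) !intrD => cl1 cl2.
rewrite ler_norml; apply/andP; split; lra.
Qed.
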